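(* Let $M>0$ and $0\le\alpha<1$, and let $r_0=r_0(\alpha)$ be the real root in $(0,1)$ of the equation \[M(1-\alpha+\alpha r)=(1+M)(1-\alpha)(1-r)^2.\] Let $\mathcal{F}$ be the class of analytic functions $f(z)=z+\sum_{n\ge2}a_nz^n$ on $\mathbb{D}$ with $|a_n|\le M$ for all $n\ge2$. Then every $f\in\mathcal{F}$ satisfies $\left|\frac{zf'(z)}{f(z)}-1\right|\le1-\alpha$ for $|z|\le r_0$; $r_0(\alpha)$ is the radius of starlikeness of order $\alpha$ of $\mathcal{F}$; and $r_0(1/2)$ is the radius of parabolic starlikeness of $\mathcal{F}$. All results are sharp (in particular $r_0$ in the first statement cannot be replaced by any larger number).
   Context: $\mathbb{D}=\{z\in\mathbb{C}:|z|<1\}$. For a class $\mathcal{F}$ of analytic functions on $\mathbb{D}$ normalized by $f(0)=0$, $f'(0)=1$, and $0\le\alpha<1$, the radius of starlikeness of order $\alpha$ of $\mathcal{F}$ is the supremum of $r\in(0,1]$ such that every $f\in\mathcal{F}$ satisfies $f(z)\ne0$ for $0<|z|<r$ and $\operatorname{Re}\big(zf'(z)/f(z)\big)>\alpha$ for $|z|<r$ (the quotient being $1$ at $z=0$). The radius of parabolic starlikeness of $\mathcal{F}$ is the supremum of $r\in(0,1]$ such that every $f\in\mathcal{F}$ satisfies $\operatorname{Re}\big(zf'(z)/f(z)\big)>\left|zf'(z)/f(z)-1\right|$ for $|z|<r$. *)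

(* Defs.v *)
From Stdlib Require Import Reals.
From Coquelicot Require Import Coquelicot.
Open Scope R_scope.

(* The class F: analytic f on the unit disc with f(z) = z + sum_{n>=2} a_n z^n, |a_n| <= M.
   f is represented as a function C -> C (values outside the disc irrelevant). *)
Definition classF (M : R) (f : C -> C) : Prop :=
  exists a : nat -> C,
    a 0%nat = 0%C /\ a 1%nat = 1%C /\
    (forall n : nat, (2 <= n)%nat -> Cmod (a n) <= M) /\
    (forall z : C, Cmod z < 1 -> is_pseries a z (f z)).

(* f is starlike of order alpha on |z| < r: f(z) <> 0 for 0 < |z| < r and
   Re (z f'(z)/f(z)) > alpha there (at z = 0 the quotient is 1 > alpha, automatic).
   f'(z) is the complex derivative d (is_derive f z d). *)
Definition starlike_order_on (alpha : R) (f : C -> C) (r : R) : Prop :=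
  forall z : C, z <> 0%C -> Cmod z < r ->
    f z <> 0%C /\
    (forall d : C, is_derive f z d -> alpha < Re (z * d / f z)%C).

(* Parabolic starlikeness on |z| < r: Re w > |w - 1| with w = z f'(z)/f(z)
   (w = 1 at z = 0, where the inequality 1 > 0 holds automatically). *)
Definition parabolic_starlike_on (f : C -> C) (r : R) : Prop :=
  forall z : C, z <> 0%C -> Cmod z < r ->
    forall d : C, is_derive f z d ->
      Cmod ((z * d / f z) - 1)%C < Re (z * d / f z)%C.

Definition radius_starlike (M alpha : R) (rho : R) : Prop :=
  is_lub (fun r => 0 < r <= 1 /\ forall f, classF M f -> starlike_order_on alpha f r) rho.

Definition radius_parabolic (M : R) (rho : R) : Prop :=
  is_lub (fun r => 0 < r <= 1 /\ forall f, classF M f -> parabolic_starlike_on f r) rho.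

Definition r0_eq (M alpha r : R) : Prop :=
  M * (1 - alpha + alpha * r) = (1 + M) * (1 - alpha) * (1 - r) ^ 2.

(* Main.v *)
Require Import Defs.
From Stdlib Require Import Reals Lra Psatz.
From Coquelicot Require Import Coquelicot.
Open Scope R_scope.

Lemma pow_n_Cpow (x : C) n : pow_n x n = Cpow x n.
Proof. induction n; simpl; auto; rewrite IHn; reflexivity. Qed.

Lemma Cmod_pow_n (x : C) n : Cmod (pow_n x n) = Cmod x ^ n.
Proof. rewrite pow_n_Cpow. apply Cmod_pow. Qed.

Lemma sum_n_norm_le (u : nat -> C) (v : nat -> R) :
  (forall n, Cmod (u n) <= v n) -> forall N, Cmod (sum_n u N) <= sum_n v N.
Proof.
  intros H N; induction N.
  - rewrite !sum_O. apply H.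
  - rewrite !sum_Sn. eapply Rle_trans. apply Cmod_triangle.
    change (plus (sum_n v N) (v (S N))) with (sum_n v N + v (S N)).
    specialize (H (S N)). lra.
Qed.

Lemma series_norm_le (u : nat -> C) (l : C) (v : nat -> R) (B : R) :
  is_series u l -> (forall n, Cmod (u n) <= v n) -> (forall N, sum_n v N <= B) ->
  Cmod l <= B.
Proof.
  intros Hs Hv HB.
  assert (H1 : is_lim_seq (fun N => Cmod (sum_n u N)) (Cmod l)).
  { exact (filterlim_comp _ _ _ (sum_n u) norm eventually (locally l) (locally (norm l)) Hs (filterlim_norm (V := C_NormedModule) l)). }
  assert (H2 := is_lim_seq_le _ _ _ _ (fun N => Rle_trans _ _ _ (sum_n_norm_le u v Hv N) (HB N)) H1 (is_lim_seq_const B)).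
  exact H2.
Qed.

Lemma conv_geom_bound (u : nat -> C) (l : C) (Cc q : R) :
  0 <= q < 1 -> (forall N, Cmod (u N - l)%C <= Cc * q ^ N) ->
  filterlim u eventually (locally l).
Proof.
  intros Hq H. apply filterlim_locally. intros eps.
  assert (HC : 0 < Rabs Cc + 1) by (pose proof (Rabs_pos Cc); lra).
  destruct (pow_lt_1_zero q ltac:(rewrite Rabs_right; lra) (eps / (Rabs Cc + 1))) as [N0 HN0].
  { apply Rdiv_lt_0_compat; [apply cond_pos | lra]. }
  exists N0. intros n Hn. apply (norm_compat1 (V := C_NormedModule)).
  change (Cmod (u n - l)%C < eps).
  eapply Rle_lt_trans. apply H.
  specialize (HN0 n Hn). rewrite Rabs_right in HN0 by (apply Rle_ge, pow_le; lra).
  assert (0 <= q ^ n) by (apply pow_le; lra).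
  apply (Rmult_lt_compat_l (Rabs Cc + 1)) in HN0; [|lra].
  replace ((Rabs Cc + 1) * (eps / (Rabs Cc + 1))) with (pos eps) in HN0 by (field; lra).
  pose proof (Rle_abs Cc). nra.
Qed.

Lemma sum_n_R_S (v : nat -> R) N : sum_n v (S N) = sum_n v N + v (S N).
Proof. rewrite sum_Sn. reflexivity. Qed.

Lemma ps1 (s : R) N : (1 - s) * sum_n (fun n => s ^ n) N = 1 - s ^ (S N).
Proof.
  induction N. rewrite sum_O. simpl. ring.
  rewrite sum_n_R_S. rewrite Rmult_plus_distr_l, IHN. simpl. ring.
Qed.

Lemma ps2 (s : R) N : (1 - s) ^ 2 * sum_n (fun n => INR (S n) * s ^ n) N
   = 1 - INR (S (S N)) * s ^ (S N) + INR (S N) * s ^ (S (S N)).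
Proof.
  induction N. rewrite sum_O. simpl. ring.
  rewrite sum_n_R_S. rewrite Rmult_plus_distr_l, IHN.
  rewrite !S_INR. simpl. ring.
Qed.

Definition qq (r : R) (n : nat) : R :=
  match n with O => 0 | S m => INR (S m) * INR (S (S m)) / 2 * r ^ m end.

Lemma ps3 (r : R) N : (1 - r) ^ 3 * sum_n (qq r) N
  = 1 - r ^ N * (INR (S N) * INR (S (S N)) / 2 * (1 - r) ^ 2
                 + INR (S (S N)) * r * (1 - r) + r ^ 2).
Proof.
  induction N. rewrite sum_O. simpl. field.
  rewrite sum_n_R_S. rewrite Rmult_plus_distr_l, IHN. unfold qq.
  rewrite !S_INR. simpl. field.
Qed.

Lemma bd1 (s : R) N : 0 <= s < 1 -> sum_n (fun n => s ^ n) N <= / (1 - s).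
Proof.
  intros Hs. pose proof (ps1 s N). assert (0 <= s ^ S N) by (apply pow_le; lra).
  apply (Rmult_le_reg_l (1 - s)). lra. rewrite H. rewrite Rinv_r; lra.
Qed.

Lemma bd2 (s : R) N : 0 <= s < 1 -> sum_n (fun n => INR (S n) * s ^ n) N <= / (1 - s) ^ 2.
Proof.
  intros Hs. pose proof (ps2 s N).
  assert (0 <= s ^ S N) by (apply pow_le; lra).
  assert (0 <= INR N) by apply pos_INR.
  assert (INR (S N) * s ^ S (S N) <= INR (S (S N)) * s ^ S N).
  { change (s ^ S (S N)) with (s * s ^ S N). rewrite !S_INR.
    generalize (s ^ S N) H0 H1; intros p Hp Hn. assert (0 <= INR N + 2 - (INR N + 1) * s) by nra. assert (0 <= p * (INR N + 2 - (INR N + 1) * s)) by (apply Rmult_le_pos; lra). nra. }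
  assert (0 < (1 - s) ^ 2) by (apply pow_lt; lra).
  apply (Rmult_le_reg_l ((1 - s) ^ 2)). lra. rewrite H. rewrite Rinv_r; lra.
Qed.

Lemma bd3 (r : R) N : 0 <= r < 1 -> sum_n (qq r) N <= / (1 - r) ^ 3.
Proof.
  intros Hs. pose proof (ps3 r N).
  assert (0 <= r ^ N) by (apply pow_le; lra).
  assert (0 <= INR N) by apply pos_INR.
  assert (0 <= (INR (S N) * INR (S (S N)) / 2 * (1 - r) ^ 2
                 + INR (S (S N)) * r * (1 - r) + r ^ 2)).
  { rewrite !S_INR. assert (0 <= (1-r)^2) by (apply pow_le; lra).
    assert (0 <= r * (1 - r)) by nra. nra. }
  assert (0 < (1 - r) ^ 3) by (apply pow_lt; lra).
  apply (Rmult_le_reg_l ((1 - r) ^ 3)). lra. rewrite H. rewrite Rinv_r; nra.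
Qed.

Lemma ex_series_pos_bounded (v : nat -> R) B :
  (forall n, 0 <= v n) -> (forall N, sum_n v N <= B) -> ex_series v.
Proof.
  intros Hp HB.
  destruct (ex_finite_lim_seq_incr (sum_n v) B) as [l Hl].
  - intros n. rewrite sum_n_R_S. specialize (Hp (S n)). lra.
  - exact HB.
  - exists l. exact Hl.
Qed.

Lemma quad_deriv (f : C -> C) (z D : C) (del K : R) : 0 < del -> 0 <= K ->
  (forall y, Cmod (y - z)%C < del -> Cmod (f y - f z - (y - z) * D)%C <= K * Cmod (y - z)%C ^ 2) ->
  is_derive f z D.
Proof.
  intros Hd HK H. split.
  - apply is_linear_scal_l.
  - intros x Hx. apply (is_filter_lim_locally_unique (V := AbsRing_NormedModule C_AbsRing)) in Hx. subst x.
    intros eps.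
    pose proof (norm_factor_gt_0 (V := AbsRing_NormedModule C_AbsRing)) as Hnf.
    assert (He : 0 < Rmin del (eps / (K + 1)) / norm_factor (V := AbsRing_NormedModule C_AbsRing)).
    { apply Rdiv_lt_0_compat; auto. apply Rmin_pos; auto. apply Rdiv_lt_0_compat. apply cond_pos. lra. }
    exists (mkposreal _ He). intros y Hy.
    apply (norm_compat2 (V := AbsRing_NormedModule C_AbsRing)) in Hy. simpl in Hy.
    replace (norm_factor * (Rmin del (eps / (K + 1)) / norm_factor)) with (Rmin del (eps / (K + 1))) in Hy by (field; lra).
    change (Cmod (f y - f z - (y - z) * D)%C <= eps * Cmod (y - z)%C).
    change (Cmod (y - z)%C < Rmin del (eps / (K + 1))) in Hy.
    assert (H1 : Cmod (y - z)%C < del) by (eapply Rlt_le_trans; [apply Hy | apply Rmin_l]).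
    assert (H2 : Cmod (y - z)%C < eps / (K + 1)) by (eapply Rlt_le_trans; [apply Hy | apply Rmin_r]).
    eapply Rle_trans. apply H. auto.
    set (c := Cmod (y - z)%C) in *. assert (0 <= c) by apply Cmod_ge_0.
    assert (c * (K + 1) < eps) by (apply (Rmult_lt_compat_r (K+1)) in H2; [|lra]; replace (eps / (K + 1) * (K + 1)) with (pos eps) in H2 by (field; lra); lra).
    pose proof (cond_pos eps). simpl. nra.
Qed.

Lemma pterm (y z : C) (r : R) m : Cmod y <= r -> Cmod z <= r ->
  Cmod (Cpow y (S (S m)) - Cpow z (S (S m)) - RtoC (INR (S (S m))) * (y - z) * Cpow z (S m))%C
  <= Cmod (y - z)%C ^ 2 * (INR (S m) * INR (S (S m)) / 2 * r ^ m).
Proof.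
  intros Hy Hz. assert (Hr : 0 <= r) by (pose proof (Cmod_ge_0 z); lra).
  induction m.
  - replace (Cpow y 2 - Cpow z 2 - RtoC (INR 2) * (y - z) * Cpow z 1)%C with ((y - z) * (y - z))%C.
    + rewrite Cmod_mult. simpl. lra.
    + simpl. replace (RtoC (1 + 1)) with (1 + 1)%C by (rewrite RtoC_plus; auto). ring.
  - replace (Cpow y (S (S (S m))) - Cpow z (S (S (S m))) - RtoC (INR (S (S (S m)))) * (y - z) * Cpow z (S (S m)))%C
      with (y * (Cpow y (S (S m)) - Cpow z (S (S m)) - RtoC (INR (S (S m))) * (y - z) * Cpow z (S m))
            + RtoC (INR (S (S m))) * ((y - z) * (y - z)) * (z * Cpow z m))%C.
    2:{ rewrite (S_INR (S (S m))). rewrite RtoC_plus. simpl Cpow. ring. }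
    eapply Rle_trans. apply Cmod_triangle.
    rewrite !Cmod_mult. rewrite Cmod_R. rewrite Rabs_right by (apply Rle_ge, pos_INR).
    rewrite Cmod_pow.
    assert (Hzm : Cmod z ^ m <= r ^ m) by (apply pow_incr; split; [apply Cmod_ge_0|auto]).
    assert (0 <= Cmod z ^ m) by (apply pow_le, Cmod_ge_0).
    set (c := Cmod (y - z)%C) in *. assert (0 <= c) by apply Cmod_ge_0.
    set (Q := Cmod (Cpow y (S (S m)) - Cpow z (S (S m)) - RtoC (INR (S (S m))) * (y - z) * Cpow z (S m))%C) in *.
    assert (0 <= Q) by apply Cmod_ge_0.
    assert (0 <= INR m) by apply pos_INR.
    assert (Hyq : Cmod y * Q <= r * (c ^ 2 * (INR (S m) * INR (S (S m)) / 2 * r ^ m))).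
    { apply Rmult_le_compat; auto. apply Cmod_ge_0. }
    assert (Hzt : Cmod z * Cmod z ^ m <= r * r ^ m).
    { apply Rmult_le_compat; auto; apply Cmod_ge_0. }
    assert (0 <= r ^ m) by (apply pow_le; auto).
    rewrite !S_INR in *. simpl pow. 
    assert (0 <= c * c) by nra.
    assert ((INR m + 1 + 1) * (c * c) * (Cmod z * Cmod z ^ m) <= (INR m + 1 + 1) * (c * c) * (r * r ^ m)).
    { apply Rmult_le_compat_l; auto. nra. }
    simpl pow in Hyq. nra.
Qed.

Lemma sum_n_R_scal (k : R) (v : nat -> R) N : sum_n (fun n => k * v n) N = k * sum_n v N.
Proof. apply (sum_n_mult_l (K := R_Ring)). Qed.

Lemma pseries_shift (a : nat -> C) (w l : C) :
  is_pseries a w l -> is_series (fun n => Cpow w (S n) * a (S n))%C (l - a O)%C.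
Proof.
  intros H. unfold is_pseries in H.
  assert (E : l = plus (l - a 0%nat)%C (scal (pow_n w 0) (a 0%nat))).
  { change (l = (l - a 0%nat) + 1 * a 0%nat)%C. ring. }
  rewrite E in H at 1.
  pose proof (is_series_incr_1 (V := C_NormedModule) _ _ H) as H1.
  eapply is_series_ext; [|exact H1]. intros n. reflexivity.
Qed.

Lemma series_deriv (a : nat -> C) (K : R) (f : C -> C) (z : C) :
  (forall n, Cmod (a n) <= K) -> Cmod z < 1 ->
  (forall w, Cmod w < 1 -> is_pseries a w (f w)) ->
  exists D, is_series (fun n => Cpow z n * (RtoC (INR (S n)) * a (S n)))%C D /\ is_derive f z D.
Proof.
  intros Ha Hz Hf.
  set (s := Cmod z). assert (Hs : 0 <= s) by apply Cmod_ge_0. assert (Hs1 : s < 1) by exact Hz.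
  assert (HK : 0 <= K) by (pose proof (Cmod_ge_0 (a O)); specialize (Ha O); lra).
  set (rho := (1 + s) / 2).
  assert (Hterm : forall n, Cmod (Cpow z n * (RtoC (INR (S n)) * a (S n)))%C <= K * (INR (S n) * s ^ n)).
  { intros n. rewrite !Cmod_mult, Cmod_pow, Cmod_R, Rabs_right by (apply Rle_ge, pos_INR).
    fold s. assert (0 <= s ^ n) by (apply pow_le; auto). pose proof (pos_INR (S n)).
    specialize (Ha (S n)). assert (0 <= s ^ n * INR (S n)) by nra. nra. }
  assert (Hex : ex_series (fun n => Cpow z n * (RtoC (INR (S n)) * a (S n)))%C).
  { apply (ex_series_le (V := C_CompleteNormedModule) _ (fun n => K * (INR (S n) * s ^ n))).
    - exact Hterm.
    - apply ex_series_pos_bounded with (B := K * / (1 - s) ^ 2).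
      + intros n. apply Rmult_le_pos; auto. apply Rmult_le_pos. apply pos_INR. apply pow_le; auto.
      + intros N. rewrite sum_n_R_scal. apply Rmult_le_compat_l; auto. apply bd2. split; [exact Hs | exact Hz]. }
  destruct Hex as [D HD]. exists D. split; [exact HD|].
  apply (quad_deriv f z D ((1 - s) / 2) (K * / (1 - rho) ^ 3)).
  - lra.
  - apply Rmult_le_pos; auto. apply Rlt_le, Rinv_0_lt_compat, pow_lt. unfold rho. lra.
  - intros y Hy.
    assert (Hyr : Cmod y <= rho).
    { replace y with (z + (y - z))%C by ring. eapply Rle_trans. apply Cmod_triangle. fold s. unfold rho. lra. }
    assert (Hzr : Cmod z <= rho) by (fold s; unfold rho; lra).
    assert (Hy1 : Cmod y < 1) by (unfold rho in Hyr; lra).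
    pose proof (pseries_shift a y (f y) (Hf y Hy1)) as Sy.
    pose proof (pseries_shift a z (f z) (Hf z Hz)) as Sz.
    pose proof (is_series_scal (V := C_NormedModule) (y - z)%C (fun n => (Cpow z n * (RtoC (INR (Datatypes.S n)) * a (Datatypes.S n)))%C) D HD) as SD.
    pose proof (is_series_minus (V := C_NormedModule) (fun n => (Cpow y (S n) * a (S n))%C) (fun n => (Cpow z (S n) * a (S n))%C) _ _ Sy Sz) as S1.
    pose proof (is_series_minus (V := C_NormedModule) (fun n => plus (Cpow y (S n) * a (S n))%C (opp (Cpow z (S n) * a (S n))%C)) (fun n => scal (y - z)%C (Cpow z n * (RtoC (INR (S n)) * a (S n)))%C) _ _ S1 SD) as Sall.
    set (c := Cmod (y - z)%C). assert (Hc : 0 <= c) by apply Cmod_ge_0.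
    replace (f y - f z - (y - z) * D)%C with
      (plus (plus (f y - a 0%nat)%C (opp (f z - a 0%nat)%C)) (opp (scal (y - z)%C D))).
    2:{ change ((f y - a 0%nat) + - (f z - a 0%nat) + - ((y - z) * D) = f y - f z - (y - z) * D)%C. ring. }
    replace (K * / (1 - rho) ^ 3 * c ^ 2) with (K * c ^ 2 * / (1 - rho) ^ 3) by ring.
    eapply (series_norm_le _ _ (fun n => K * c ^ 2 * qq rho n)).
    + exact Sall.
    + intros n. change (Cmod (Cpow y (S n) * a (S n) + - (Cpow z (S n) * a (S n)) + - ((y - z) * (Cpow z n * (RtoC (INR (S n)) * a (S n)))))%C <= K * c ^ 2 * qq rho n).
      destruct n as [|m].
      * replace (Cpow y 1 * a 1%nat + - (Cpow z 1 * a 1%nat) + - ((y - z) * (Cpow z 0 * (RtoC (INR 1) * a 1%nat))))%C with (RtoC 0).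
        { rewrite Cmod_0. simpl. lra. }
        simpl. ring.
      * replace (Cpow y (S (S m)) * a (S (S m)) + - (Cpow z (S (S m)) * a (S (S m))) + - ((y - z) * (Cpow z (S m) * (RtoC (INR (S (S m))) * a (S (S m))))))%C
          with (a (S (S m)) * (Cpow y (S (S m)) - Cpow z (S (S m)) - RtoC (INR (S (S m))) * (y - z) * Cpow z (S m)))%C by ring.
        rewrite Cmod_mult. simpl qq.
        pose proof (pterm y z rho m Hyr Hzr) as P.
        rewrite Rmult_assoc. apply Rmult_le_compat; auto; try apply Cmod_ge_0.
        
    + intros N. rewrite sum_n_R_scal. apply Rmult_le_compat_l.
      * apply Rmult_le_pos; auto. apply pow_le; auto.
      * apply bd3. unfold rho; split; lra.
Qed.

Lemma shift1 (u : nat -> C) (l : C) : is_series u l -> is_series (fun n => u (S n)) (l - u O)%C.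
Proof.
  intros H.
  assert (E : l = plus (l - u 0%nat)%C (u 0%nat)) by (change (l = (l - u 0%nat) + u 0%nat)%C; ring).
  rewrite E in H at 1. exact (is_series_incr_1 (V := C_NormedModule) _ _ H).
Qed.

Lemma is_series_val (u : nat -> C) (l l' : C) : is_series u l -> l = l' -> is_series u l'.
Proof. intros H <-; exact H. Qed.

Lemma is_series_C_ext (u v : nat -> C) (l : C) : (forall n, u n = v n) -> is_series u l -> is_series v l.
Proof. intros E H. exact (is_series_ext (V := C_NormedModule) u v l E H). Qed.

Lemma main_bound (M : R) (f : C -> C) (z : C) : classF M f -> Cmod z < 1 ->
  Cmod (f z - z)%C <= M * Cmod z ^ 2 * / (1 - Cmod z) /\
  (forall d, is_derive f z d -> Cmod (z * d - f z)%C <= M * Cmod z ^ 2 * / (1 - Cmod z) ^ 2).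
Proof.
  intros [a [a0 [a1 [Hb Hser]]]] Hz.
  set (s := Cmod z). assert (Hs : 0 <= s) by apply Cmod_ge_0. assert (Hs1 : s < 1) by exact Hz.
  assert (HM : 0 <= M) by (specialize (Hb 2%nat (le_n _)); pose proof (Cmod_ge_0 (a 2%nat)); lra).
  pose proof (pseries_shift a z (f z) (Hser z Hz)) as S1.
  rewrite a0 in S1.
  pose proof (shift1 _ _ S1) as S2. simpl in S2.
  assert (Hpow : forall n, Cmod (Cpow z n) = s ^ n) by (intros; apply Cmod_pow).
  split.
  - apply (is_series_val _ _ (f z - z)%C) in S2.
    2:{ rewrite a1. ring. }
    replace (M * s ^ 2 * / (1 - s)) with (M * s ^ 2 * / (1 - s)) by ring.
    eapply (series_norm_le _ _ (fun n => M * s ^ 2 * s ^ n)).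
    + exact S2.
    + intros n. simpl. rewrite Cmod_mult, Cmod_mult, Cmod_mult. fold s. rewrite Hpow.
      assert (0 <= s ^ n) by (apply pow_le; auto).
      specialize (Hb (S (S n)) ltac:(lia)).
      assert (0 <= s * (s * s ^ n)) by (apply Rmult_le_pos; auto; apply Rmult_le_pos; auto).
      assert (s * (s * s ^ n) * Cmod (a (S (S n))) <= s * (s * s ^ n) * M) by (apply Rmult_le_compat_l; auto).
      nra.
    + intros N. rewrite sum_n_R_scal. apply Rmult_le_compat_l.
      * apply Rmult_le_pos; auto. apply pow_le; auto.
      * apply bd1; split; auto.
  - intros d Hd.
    assert (HK : forall n, Cmod (a n) <= Rabs M + 1).
    { intros [|[|n]].
      - rewrite a0, Cmod_0. pose proof (Rabs_pos M). lra.
      - rewrite a1, Cmod_1. pose proof (Rabs_pos M). lra.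
      - specialize (Hb (S (S n)) ltac:(lia)). pose proof (Rle_abs M). lra. }
    destruct (series_deriv a (Rabs M + 1) f z HK Hz Hser) as [D [HD HdD]].
    assert (d = D).
    { apply is_C_derive_unique in Hd. apply is_C_derive_unique in HdD. congruence. }
    subst d.
    pose proof (is_series_scal (V := C_NormedModule) z _ _ HD) as S3.
    pose proof (is_series_minus (V := C_NormedModule) _ _ _ _ S3 S1) as S4.
    pose proof (shift1 _ _ S4) as S5.
    apply (is_series_val _ _ (z * D - f z)%C) in S5.
    2:{ change ((z * D + - (f z - 0)) - (z * (Cpow z 0 * (RtoC (INR 1) * a 1%nat)) + - (Cpow z 1 * a 1%nat)) = z * D - f z)%C.
        simpl. rewrite a1. ring. }
    eapply (series_norm_le _ _ (fun n => M * s ^ 2 * (INR (S n) * s ^ n))).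
    + exact S5.
    + intros n.
      change (Cmod (z * (Cpow z (S n) * (RtoC (INR (S (S n))) * a (S (S n)))) + - (Cpow z (S (S n)) * a (S (S n))))%C
              <= M * s ^ 2 * (INR (S n) * s ^ n)).
      replace (z * (Cpow z (S n) * (RtoC (INR (S (S n))) * a (S (S n)))) + - (Cpow z (S (S n)) * a (S (S n))))%C
        with (RtoC (INR (S n)) * (z * z * Cpow z n) * a (S (S n)))%C.
      2:{ rewrite (S_INR (S n)). rewrite RtoC_plus. simpl Cpow. ring. }
      rewrite !Cmod_mult, Cmod_R, Rabs_right by (apply Rle_ge, pos_INR). fold s. rewrite Hpow.
      assert (0 <= s ^ n) by (apply pow_le; auto).
      pose proof (pos_INR (S n)).
      specialize (Hb (S (S n)) ltac:(lia)).
      assert (0 <= INR (S n) * (s * s * s ^ n)) by (apply Rmult_le_pos; auto; apply Rmult_le_pos; auto; apply Rmult_le_pos; auto).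
      assert (INR (S n) * (s * s * s ^ n) * Cmod (a (S (S n))) <= INR (S n) * (s * s * s ^ n) * M) by (apply Rmult_le_compat_l; auto).
      simpl pow. nra.
    + intros N. rewrite sum_n_R_scal. apply Rmult_le_compat_l.
      * apply Rmult_le_pos; auto. apply pow_le; auto.
      * apply bd2; split; auto.
Qed.
Lemma RtoC_nz x : x <> 0 -> RtoC x <> 0%C.
Proof. intros H E. apply H. injection E. auto. Qed.
Lemma geom_partial (w : C) N : (sum_n (fun n => Cpow w n) N * (1 - w) = 1 - Cpow w (S N))%C.
Proof.
  induction N.
  - rewrite sum_O. simpl. ring.
  - rewrite sum_Sn. change ((sum_n (fun n => Cpow w n) N + Cpow w (S N)) * (1 - w) = 1 - Cpow w (S (S N)))%C.
    rewrite Cmult_plus_distr_r, IHN. simpl. ring.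
Qed.

Lemma one_minus_nz (w : C) : Cmod w < 1 -> (1 - w)%C <> 0%C.
Proof.
  intros H E. assert (w = 1%C) by (transitivity (1 - (1 - w))%C; [ring | rewrite E; ring]).
  subst w. rewrite Cmod_1 in H. lra.
Qed.

Lemma geomC (w : C) : Cmod w < 1 -> is_series (fun n => Cpow w n) (/ (1 - w))%C.
Proof.
  intros Hw. pose proof (one_minus_nz w Hw) as Hnz.
  apply (conv_geom_bound _ _ (Cmod w / Cmod (1 - w)%C) (Cmod w)).
  - split; auto. apply Cmod_ge_0.
  - intros N.
    match goal with |- Cmod ?X <= _ => assert (E : X = (- Cpow w (S N) / (1 - w))%C); [|rewrite E] end.
    + transitivity (sum_n (fun n => Cpow w n) N - / (1 - w))%C; [reflexivity|].
      pose proof (geom_partial w N) as G.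
      assert (Hgen : forall X : C, (X * (1 - w) = 1 - Cpow w (S N) -> X - / (1 - w) = - Cpow w (S N) / (1 - w))%C).
      { intros X HX. assert (X = X * (1 - w) / (1 - w))%C by (field; auto).
        rewrite H, HX. field. auto. }
      apply Hgen. exact G.
    + rewrite Cmod_div by auto. rewrite Cmod_opp, Cmod_pow. simpl. right. field.
      apply Cmod_gt_0 in Hnz. lra.
Qed.

Definition fext (M : R) (w : C) : C := (w - RtoC M * w * w / (1 - w))%C.
Definition aext (M : R) (n : nat) : C :=
  match n with O => 0%C | S O => 1%C | _ => RtoC (- M) end.

Lemma fext_classF (M : R) : 0 <= M -> classF M (fext M).
Proof.
  intros HM. exists (aext M). split; [reflexivity|]. split; [reflexivity|]. split.
  - intros [|[|n]] Hn; try lia. simpl. rewrite Cmod_R, Rabs_Ropp, Rabs_right; lra.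
  - intros w Hw. unfold is_pseries.
    apply (is_series_decr_1 (V := C_NormedModule)).
    apply (is_series_decr_1 (V := C_NormedModule)).
    pose proof (is_series_scal (V := C_NormedModule) (RtoC (- M) * w * w)%C _ _ (geomC w Hw)) as G.
    eapply is_series_val.
    + eapply is_series_C_ext; [|exact G]. intros n. cbv beta.
      change (RtoC (- M) * w * w * Cpow w n = Cpow w (S (S n)) * RtoC (- M))%C. simpl. ring.
    + pose proof (one_minus_nz w Hw). change (RtoC (- M) * w * w * / (1 - w) = fext M w + - (Cmult 1 0) + - (Cmult (Cmult w 1) 1))%C.
      unfold fext. rewrite RtoC_opp. field. auto.
Qed.

Definition dC (M s : R) : C :=
  (1 - RtoC M * (2 * RtoC s - RtoC s * RtoC s) / ((1 - RtoC s) * (1 - RtoC s)))%C.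

Lemma Cmod_1_minus_R (s : R) : s < 1 -> Cmod (1 - RtoC s)%C = 1 - s.
Proof. intros H. rewrite <- RtoC_minus, Cmod_R, Rabs_right; lra. Qed.

Lemma fext_deriv (M s : R) : 0 <= M -> 0 <= s < 1 -> is_derive (fext M) (RtoC s) (dC M s).
Proof.
  intros HM Hs.
  apply (quad_deriv _ _ _ ((1 - s) / 2) (2 * M / (1 - s) ^ 3)).
  - lra.
  - apply Rmult_le_pos; [lra|]. apply Rlt_le, Rinv_0_lt_compat, pow_lt; lra.
  - intros y Hy.
    set (c := Cmod (y - RtoC s)%C) in *. assert (Hc : 0 <= c) by apply Cmod_ge_0.
    assert (Hs1 : Cmod (1 - RtoC s)%C = 1 - s) by (apply Cmod_1_minus_R; lra).
    assert (Hy1 : (1 - s) / 2 <= Cmod (1 - y)%C).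
    { assert (Cmod (1 - RtoC s)%C <= Cmod (1 - y)%C + c).
      { replace (1 - RtoC s)%C with ((1 - y) + (y - RtoC s))%C by ring. apply Cmod_triangle. }
      lra. }
    assert (Hnz1 : (1 - y)%C <> 0%C) by (intro E; rewrite E, Cmod_0 in Hy1; lra).
    assert (Hnz2 : (1 - RtoC s)%C <> 0%C) by (intro E; rewrite E, Cmod_0 in Hs1; lra).
    replace (fext M y - fext M (RtoC s) - (y - RtoC s) * dC M s)%C with
      (- RtoC M * ((y - RtoC s) * (y - RtoC s)) / ((1 - y) * ((1 - RtoC s) * (1 - RtoC s))))%C.
    2:{ unfold fext, dC. field. auto. }
    rewrite Cmod_div. 2:{ intro E. apply (f_equal Cmod) in E. rewrite !Cmod_mult, Cmod_0, Hs1 in E.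
      assert (0 < Cmod (1 - y)%C) by lra. assert (0 < 1 - s) by lra.
      assert (0 < Cmod (1 - y)%C * ((1 - s) * (1 - s))) by (apply Rmult_lt_0_compat; nra). lra. }
    rewrite !Cmod_mult, Cmod_opp, Cmod_R, Rabs_right by lra. fold c. rewrite Hs1.
    set (X := Cmod (1 - y)%C) in *.
    assert (0 < 1 - s) by lra.
    assert (HX : 0 < X) by lra.
    assert (Hd : 0 < (1 - s) / 2 * ((1 - s) * (1 - s))) by (apply Rmult_lt_0_compat; nra).
    apply Rle_trans with (M * (c * c) / ((1 - s) / 2 * ((1 - s) * (1 - s)))).
    - unfold Rdiv. apply Rmult_le_compat_l. apply Rmult_le_pos; nra.
      apply Rinv_le_contravar; auto. apply Rmult_le_compat_r; nra.
    - right. field. lra.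
Qed.

Lemma ext_ratio (M s : R) : 0 <= M -> 0 < s < 1 -> 0 < 1 - s - M * s ->
  fext M (RtoC s) <> 0%C /\
  (RtoC s * dC M s / fext M (RtoC s) - 1)%C = RtoC (- (M * s / ((1 - s) * (1 - s - M * s)))).
Proof.
  intros HM Hs Hd.
  assert (E1 : (1 - RtoC s)%C = RtoC (1 - s)) by (rewrite RtoC_minus; reflexivity).
  assert (E2 : (1 - RtoC s - RtoC M * RtoC s)%C = RtoC (1 - s - M * s)) by (rewrite !RtoC_minus, RtoC_mult; reflexivity).
  assert (N0 : RtoC s <> 0%C) by (apply RtoC_nz; lra).
  assert (N1 : (1 - RtoC s)%C <> 0%C) by (rewrite E1; apply RtoC_nz; lra).
  assert (N2 : (1 - RtoC s - RtoC M * RtoC s)%C <> 0%C) by (rewrite E2; apply RtoC_nz; lra).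
  assert (Ef : fext M (RtoC s) = (RtoC s * (1 - RtoC s - RtoC M * RtoC s) / (1 - RtoC s))%C).
  { unfold fext. field. auto. }
  assert (Nf : fext M (RtoC s) <> 0%C).
  { rewrite Ef. intro E. apply (f_equal (fun x => x * (1 - RtoC s))%C) in E.
    replace (RtoC s * (1 - RtoC s - RtoC M * RtoC s) / (1 - RtoC s) * (1 - RtoC s))%C
      with (RtoC s * (1 - RtoC s - RtoC M * RtoC s))%C in E by (field; auto).
    rewrite Cmult_0_l in E. apply (f_equal Cmod) in E. rewrite Cmod_mult, Cmod_0 in E.
    apply Cmod_gt_0 in N0. apply Cmod_gt_0 in N2. nra. }
  split; auto.
  rewrite Ef.
  rewrite RtoC_opp, RtoC_div by (apply Rgt_not_eq; apply Rmult_lt_0_compat; lra).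
  rewrite RtoC_mult, RtoC_mult, <- E1, <- E2.
  unfold dC. field. repeat split; auto.
Qed.

Definition hh (M al s : R) := (1 - al) * (1 - s) * (1 - s - M * s) - M * s.
Definition gg (M s : R) := M * s / ((1 - s) * (1 - s - M * s)).

Lemma hh_r0 M al r : r0_eq M al r -> hh M al r = 0.
Proof. unfold r0_eq, hh. intros H. simpl in H. nra. Qed.

Lemma hh_below M al r0 s : 0 < M -> 0 <= al < 1 -> 0 < r0 < 1 -> r0_eq M al r0 ->
  0 <= s < r0 -> 0 < hh M al s.
Proof.
  intros HM Ha Hr H Hs. apply hh_r0 in H.
  assert (Id : (1 - r0) * hh M al s = (1 - s) * hh M al r0 - (r0 - s) * hh M al 1
     + (1 - al) * (1 + M) * (1 - r0) * (r0 - s) * (1 - s)) by (unfold hh; ring).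
  assert (H1 : hh M al 1 = - M) by (unfold hh; ring).
  rewrite H, H1 in Id.
  assert (0 < (1 - al) * (1 + M) * (1 - r0) * (r0 - s) * (1 - s)).
  { repeat apply Rmult_lt_0_compat; lra. }
  assert (0 < (1 - r0) * hh M al s) by nra.
  nra.
Qed.

Lemma hh_above M al r0 s : 0 < M -> 0 <= al < 1 -> 0 < r0 < 1 -> r0_eq M al r0 ->
  r0 < s < 1 -> hh M al s < 0.
Proof.
  intros HM Ha Hr H Hs. apply hh_r0 in H.
  assert (Id : (1 - r0) * hh M al s = (1 - s) * hh M al r0 + (s - r0) * hh M al 1
     - (1 - al) * (1 + M) * (s - r0) * (1 - s) * (1 - r0)) by (unfold hh; ring).
  assert (H1 : hh M al 1 = - M) by (unfold hh; ring).
  rewrite H, H1 in Id.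
  assert (0 < (1 - al) * (1 + M) * (s - r0) * (1 - s) * (1 - r0)).
  { repeat apply Rmult_lt_0_compat; lra. }
  assert ((1 - r0) * hh M al s < 0) by nra.
  nra.
Qed.

Lemma r0_small M al r0 : 0 < M -> 0 <= al < 1 -> 0 < r0 < 1 -> r0_eq M al r0 ->
  0 < 1 - r0 - M * r0.
Proof.
  intros HM Ha Hr H. apply hh_r0 in H. unfold hh in H.
  destruct (Rle_lt_dec (1 - r0 - M * r0) 0) as [Hn|Hp]; auto.
  assert (0 <= (1 - al) * (1 - r0)) by nra.
  assert ((1 - al) * (1 - r0) * (1 - r0 - M * r0) <= 0) by nra.
  nra.
Qed.

Lemma gg_le M al s : 0 < M -> 0 <= al < 1 -> 0 < s < 1 -> 0 < 1 - s - M * s ->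
  0 <= hh M al s -> gg M s <= 1 - al.
Proof.
  intros. unfold gg, hh in *. assert (0 < (1 - s) * (1 - s - M * s)) by (apply Rmult_lt_0_compat; lra).
  apply (Rmult_le_reg_r ((1 - s) * (1 - s - M * s))); auto.
  unfold Rdiv. rewrite Rmult_assoc, Rinv_l by lra. nra.
Qed.

Lemma gg_lt M al s : 0 < M -> 0 <= al < 1 -> 0 < s < 1 -> 0 < 1 - s - M * s ->
  0 < hh M al s -> gg M s < 1 - al.
Proof.
  intros. unfold gg, hh in *. assert (0 < (1 - s) * (1 - s - M * s)) by (apply Rmult_lt_0_compat; lra).
  apply (Rmult_lt_reg_r ((1 - s) * (1 - s - M * s))); auto.
  unfold Rdiv. rewrite Rmult_assoc, Rinv_l by lra. nra.
Qed.

Lemma gg_gt M al s : 0 < M -> 0 <= al < 1 -> 0 < s < 1 -> 0 < 1 - s - M * s ->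
  hh M al s < 0 -> 1 - al < gg M s.
Proof.
  intros. unfold gg, hh in *. assert (0 < (1 - s) * (1 - s - M * s)) by (apply Rmult_lt_0_compat; lra).
  apply (Rmult_lt_reg_r ((1 - s) * (1 - s - M * s))); auto.
  unfold Rdiv. rewrite Rmult_assoc, Rinv_l by lra. nra.
Qed.

Lemma gg_pos M s : 0 < M -> 0 < s < 1 -> 0 < 1 - s - M * s -> 0 < gg M s.
Proof. intros. unfold gg. apply Rdiv_lt_0_compat. nra. apply Rmult_lt_0_compat; lra. Qed.

Lemma bound_at (M : R) (f : C -> C) (z : C) : 0 < M -> classF M f -> z <> 0%C -> Cmod z < 1 ->
  0 < 1 - Cmod z - M * Cmod z ->
  f z <> 0%C /\ (forall d, is_derive f z d -> Cmod (z * d / f z - 1)%C <= gg M (Cmod z)).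
Proof.
  intros HM Hf Hz0 Hz Hd.
  destruct (main_bound M f z Hf Hz) as [B1 B2].
  set (s := Cmod z) in *. assert (Hs : 0 < s) by (apply Cmod_gt_0; auto).
  assert (Hfz : s * (1 - s - M * s) / (1 - s) <= Cmod (f z)).
  { assert (T : s <= Cmod (f z) + Cmod (f z - z)%C).
    { unfold s. replace z with (f z - (f z - z))%C at 1 by ring.
      eapply Rle_trans. apply Cmod_triangle. rewrite Cmod_opp. lra. }
    replace (s * (1 - s - M * s) / (1 - s)) with (s - M * s ^ 2 * / (1 - s)) by (field; lra).
    lra. }
  assert (Hpos : 0 < s * (1 - s - M * s) / (1 - s)) by (apply Rdiv_lt_0_compat; [apply Rmult_lt_0_compat|]; lra).
  assert (Nf : f z <> 0%C) by (intro E; rewrite E, Cmod_0 in Hfz; lra).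
  split; auto.
  intros d Hd'. specialize (B2 d Hd').
  replace (z * d / f z - 1)%C with ((z * d - f z) / f z)%C by (field; auto).
  rewrite Cmod_div by auto.
  apply Rle_trans with ((M * s ^ 2 * / (1 - s) ^ 2) / (s * (1 - s - M * s) / (1 - s))).
  - unfold Rdiv. apply Rmult_le_compat; auto. apply Cmod_ge_0.
    apply Rlt_le, Rinv_0_lt_compat. apply Cmod_gt_0; auto.
    apply Rinv_le_contravar; auto.
  - right. unfold gg. field. repeat split; lra.
Qed.

Lemma Re_ge (w : C) : 1 - Cmod (w - 1)%C <= Re w.
Proof.
  pose proof (re_le_Cmod (w - 1)%C) as H.
  assert (E : Re (w - 1)%C = Re w - 1) by (destruct w; simpl; ring).
  rewrite E in H. pose proof (Rle_abs (- (Re w - 1))). rewrite Rabs_Ropp in H0. lra.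
Qed.

Lemma Re_of (X : C) (y : R) : (X - 1)%C = RtoC y -> Re X = 1 + y.
Proof.
  intros E. assert (X = RtoC y + 1)%C by (rewrite <- E; ring). rewrite H.
  simpl. ring.
Qed.

Lemma witness M r0 r : 0 < M -> 0 < r0 -> 0 < 1 - r0 - M * r0 -> r0 < r ->
  exists s, r0 < s < r /\ s < 1 /\ 0 < 1 - s - M * s.
Proof.
  intros HM Hr0 Hc Hr.
  set (c := / (1 + M)).
  assert (Hc1 : (1 + M) * c = 1) by (unfold c; field; lra).
  assert (Hcr : r0 < c).
  { apply (Rmult_lt_reg_l (1 + M)). lra. rewrite Hc1. lra. }
  set (t := Rmin (r - r0) (c - r0)).
  assert (Ht : 0 < t) by (apply Rmin_pos; lra).
  assert (Ht1 : t <= r - r0) by apply Rmin_l.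
  assert (Ht2 : t <= c - r0) by apply Rmin_r.
  exists (r0 + t / 2). split; [lra|].
  assert (Hs : (1 + M) * (r0 + t / 2) < (1 + M) * c) by (apply Rmult_lt_compat_l; lra).
  split; nra.
Qed.

Lemma Cmod_RtoC_pos s : 0 < s -> Cmod (RtoC s) = s.
Proof. intros. rewrite Cmod_R, Rabs_right; lra. Qed.

Lemma Cmod_RtoC_neg g : 0 < g -> Cmod (RtoC (- g)) = g.
Proof. intros. rewrite Cmod_R, Rabs_Ropp, Rabs_right; lra. Qed.

Theorem corollary2p6 (M alpha r0 r12 : R) :
  0 < M -> 0 <= alpha < 1 ->
  0 < r0 < 1 -> r0_eq M alpha r0 ->
  0 < r12 < 1 -> r0_eq M (1 / 2) r12 ->
  ((forall f, classF M f ->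
     forall z : C, z <> 0%C -> Cmod z <= r0 ->
       f z <> 0%C /\
       (forall d : C, is_derive f z d -> Cmod ((z * d / f z) - 1)%C <= 1 - alpha)) /\
   (forall r, r0 < r ->
     exists f (z d : C), classF M f /\ z <> 0%C /\ Cmod z <= r /\ Cmod z < 1 /\
       f z <> 0%C /\ is_derive f z d /\ 1 - alpha < Cmod ((z * d / f z) - 1)%C)) /\
  radius_starlike M alpha r0 /\
  radius_parabolic M r12.
Proof.
  intros HM Hal Hr0 E0 Hr12 E12.
  assert (Hal2 : 0 <= 1 / 2 < 1) by lra.
  pose proof (r0_small M alpha r0 HM Hal Hr0 E0) as C0.
  pose proof (r0_small M (1/2) r12 HM Hal2 Hr12 E12) as C12.
  assert (HM0 : 0 <= M) by lra.
  assert (EXT : forall s, 0 < s < 1 -> 0 < 1 - s - M * s ->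
     classF M (fext M) /\ RtoC s <> 0%C /\ Cmod (RtoC s) = s /\ fext M (RtoC s) <> 0%C /\
     is_derive (fext M) (RtoC s) (dC M s) /\
     (RtoC s * dC M s / fext M (RtoC s) - 1)%C = RtoC (- gg M s)).
  { intros s Hs Hd. destruct (ext_ratio M s HM0 Hs Hd) as [N R].
    split; [apply fext_classF; auto|].
    split; [apply RtoC_nz; lra|].
    split; [apply Cmod_RtoC_pos; lra|].
    split; [auto|].
    split; [apply fext_deriv; auto; lra|].
    rewrite R. unfold gg. reflexivity. }
  assert (INNER : forall al r, 0 <= al < 1 -> 0 < r < 1 -> r0_eq M al r ->
     forall f, classF M f -> forall z : C, z <> 0%C -> Cmod z <= r ->
       f z <> 0%C /\ (forall d : C, is_derive f z d -> Cmod (z * d / f z - 1)%C <= gg M (Cmod z)) /\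
       0 < Cmod z /\ Cmod z < 1 /\ 0 < 1 - Cmod z - M * Cmod z).
  { intros al r Hal' Hr E f Hf z Hz0 Hzr.
    pose proof (r0_small M al r HM Hal' Hr E) as Cr.
    assert (Hs : 0 < Cmod z) by (apply Cmod_gt_0; auto).
    assert (Hd : 0 < 1 - Cmod z - M * Cmod z) by nra.
    destruct (bound_at M f z HM Hf Hz0 ltac:(lra) Hd) as [N B].
    split; [auto|]. split; [auto|]. split; [auto|]. split; [lra|]. exact Hd. }
  split; [split|split].
  - intros f Hf z Hz0 Hzr.
    destruct (INNER alpha r0 Hal Hr0 E0 f Hf z Hz0 Hzr) as [N [B [Hs [Hs1 Hd]]]].
    split; auto. intros d Hd'. eapply Rle_trans. apply B; auto.
    apply gg_le; auto.
    destruct (Rle_lt_dec r0 (Cmod z)) as [Hle|Hlt].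
    + assert (Cmod z = r0) by lra. rewrite H. rewrite hh_r0; auto; lra.
    + apply Rlt_le, (hh_below M alpha r0); auto. lra.
  - intros r Hr.
    destruct (witness M r0 r HM ltac:(lra) C0 Hr) as [s [Hs [Hs1 Hd]]].
    destruct (EXT s ltac:(lra) Hd) as [F [Z [CM [N [D R]]]]].
    exists (fext M), (RtoC s), (dC M s).
    split; [auto|]. split; [auto|]. split; [rewrite CM; lra|]. split; [rewrite CM; lra|].
    split; [auto|]. split; [auto|].
    rewrite R, Cmod_RtoC_neg by (apply gg_pos; auto; lra).
    apply (gg_gt M alpha s); auto; try lra.
    apply (hh_above M alpha r0); auto; lra.
  - split.
    + intros r [Hr1 Hr2].
      destruct (Rle_lt_dec r r0) as [Hle|Hlt]; auto. exfalso.
      destruct (witness M r0 r HM ltac:(lra) C0 Hlt) as [s [Hs [Hs1 Hd]]].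
      destruct (EXT s ltac:(lra) Hd) as [F [Z [CM [N [D R]]]]].
      destruct (Hr2 (fext M) F (RtoC s) Z ltac:(lra)) as [_ Hst].
      specialize (Hst _ D). apply Re_of in R. rewrite R in Hst.
      assert (1 - alpha < gg M s).
      { apply (gg_gt M alpha s); auto; try lra. apply (hh_above M alpha r0); auto; lra. }
      lra.
    + intros b Hb. apply Hb. split; [lra|].
      intros f Hf z Hz0 Hzr.
      destruct (INNER alpha r0 Hal Hr0 E0 f Hf z Hz0 ltac:(lra)) as [N [B [Hs [Hs1 Hd]]]].
      split; auto. intros d Hd'. specialize (B d Hd').
      pose proof (Re_ge (z * d / f z)%C).
      assert (gg M (Cmod z) < 1 - alpha).
      { apply gg_lt; auto. apply (hh_below M alpha r0); auto. lra. }
      lra.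
  - split.
    + intros r [Hr1 Hr2].
      destruct (Rle_lt_dec r r12) as [Hle|Hlt]; auto. exfalso.
      destruct (witness M r12 r HM ltac:(lra) C12 Hlt) as [s [Hs [Hs1 Hd]]].
      destruct (EXT s ltac:(lra) Hd) as [F [Z [CM [N [D R]]]]].
      specialize (Hr2 (fext M) F (RtoC s) Z ltac:(lra) _ D).
      assert (Hg : 1 - 1 / 2 < gg M s).
      { apply (gg_gt M (1/2) s); auto; try lra. apply (hh_above M (1/2) r12); auto; lra. }
      pose proof (Re_of _ _ R) as RR. rewrite R, RR, Cmod_RtoC_neg in Hr2 by lra.
      lra.
    + intros b Hb. apply Hb. split; [lra|].
      intros f Hf z Hz0 Hzr d Hd'.
      destruct (INNER (1/2) r12 Hal2 Hr12 E12 f Hf z Hz0 ltac:(lra)) as [N [B [Hs [Hs1 Hd]]]].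
      specialize (B d Hd').
      pose proof (Re_ge (z * d / f z)%C).
      assert (gg M (Cmod z) < 1 - 1 / 2).
      { apply gg_lt; auto. apply (hh_below M (1/2) r12); auto. lra. }
      lra.
Qed.
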